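(* Let $H=(U,(A_1,\dots,A_m))$ be a harmonic set system with $|U|<m(m-2)$ and $m\ge 51$. Then for any two nonconsecutive sets $I,J\subseteq[m]$ of size $3$, $H_{I,J}=\emptyset$.
   Context: For $I_1,I_2\subseteq[m]$, $H_{I_1,I_2}=\bigcap_{i\in I_1}A_i\cap\bigcap_{i\in I_2}(U\setminus A_i)$ (empty intersection $=U$), $H_I=H_{I,\emptyset}$. The run decomposition of a finite set $I$ of positive integers is the partition of sizes, in nonincreasing order, of the maximal runs of consecutive integers in $I$. $H$ is harmonic if $|H_I|=|H_J|$ whenever $I,J\subseteq[m]$ have the same run decomposition. A set of integers is nonconsecutive if no two distinct elements differ by exactly $1$. *)

(* Defs.v *)
From mathcomp Require Import all_boot.
Set Implicit Arguments. Unset Strict Implicit. Unset Printing Implicit Defensive.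

(* Convention: the ground set [m] = {1,...,m} is represented by 'I_m, the
   ordinal i standing for the integer i+1.  This shift preserves which pairs
   are consecutive, hence run decompositions and nonconsecutiveness. *)

Definition Hsys (U : finType) (m : nat) (A : 'I_m -> {set U})
  (I1 I2 : {set 'I_m}) : {set U} :=
  [set x : U | [forall i in I1, x \in A i] && [forall i in I2, x \notin A i]].

Definition HI (U : finType) (m : nat) (A : 'I_m -> {set U}) (I : {set 'I_m}) :=
  Hsys A I set0.

Definition memn (m : nat) (I : {set 'I_m}) (n : nat) : bool :=
  [exists i in I, val i == n].

Fixpoint runlen_aux (m : nat) (I : {set 'I_m}) (fuel n : nat) : nat :=
  if fuel is fuel'.+1 then
    (if memn I n then (runlen_aux I fuel' n.+1).+1 else 0)
  else 0.

Definition runlen (m : nat) (I : {set 'I_m}) (n : nat) : nat :=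
  runlen_aux I m.+1 n.

Definition run_start (m : nat) (I : {set 'I_m}) (i : 'I_m) : bool :=
  (i \in I) && ((val i == 0) || ~~ memn I (val i).-1).

Definition run_decomp (m : nat) (I : {set 'I_m}) : seq nat :=
  sort geq [seq runlen I (val i) | i <- enum 'I_m & run_start I i].

Definition harmonic (U : finType) (m : nat) (A : 'I_m -> {set U}) : Prop :=
  forall I J : {set 'I_m}, run_decomp I = run_decomp J ->
    #|HI A I| = #|HI A J|.

Definition nonconsecutive (m : nat) (I : {set 'I_m}) : bool :=
  [forall i in I, forall j in I, val i != (val j).+1].

(* Main.v *)
Require Import Defs.
From mathcomp Require Import all_boot.
From mathcomp Require Import zify.
Set Implicit Arguments. Unset Strict Implicit. Unset Printing Implicit Defensive.

Lemma card_ordP m (P : pred nat) : #|[set i : 'I_m | P (val i)]| = count P (iota 0 m).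
Proof.
rewrite cardsE cardE /enum_mem -enumT size_filter -val_enum_ord count_map.
by apply: eq_count.
Qed.

Lemma count_even m : m <= (count (fun k => ~~ odd k) (iota 0 m)).*2.
Proof.
suff H : (count (fun k => ~~ odd k) (iota 0 m)).*2 = m + odd m by rewrite H leq_addr.
elim: m => [|m IH] //.
rewrite -addn1 iotaD count_cat /= doubleD IH addn0 add0n /= addn1 .
by case h: (odd m); rewrite /= ?h /=; lia.
Qed.

Lemma nc_sub m (B C : {set 'I_m}) : B \subset C -> nonconsecutive C -> nonconsecutive B.
Proof.
move=> sBC /forallP H; apply/forallP => i; apply/implyP => iB.
apply/forallP => j; apply/implyP => jB.
move: (H i) => /implyP /(_ (subsetP sBC _ iB)) /forallP /(_ j) /implyP; apply.
exact: (subsetP sBC _ jB).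
Qed.

Lemma ncE m (I : {set 'I_m}) i j : nonconsecutive I -> i \in I -> j \in I -> val i != (val j).+1.
Proof.
move=> /forallP H iI jI.
by move: (H i) => /implyP /(_ iI) /forallP /(_ j) /implyP /(_ jI).
Qed.

Lemma ncP m (I : {set 'I_m}) : (forall i j, i \in I -> j \in I -> val i != (val j).+1) -> nonconsecutive I.
Proof.
move=> H; apply/forallP => i; apply/implyP => iI; apply/forallP => j; apply/implyP => jI.
exact: H.
Qed.

Lemma map_const' (T1 T2 : Type) (c : T2) (s : seq T1) : [seq c | _ <- s] = nseq (size s) c.
Proof. by elim: s => //= a s ->. Qed.

Lemma runlen_aux0 m (I : {set 'I_m}) f n : ~~ memn I n -> runlen_aux I f n = 0.
Proof. by case: f => //= f h; rewrite (negbTE h). Qed.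

Lemma rd_map m (I : {set 'I_m}) : nonconsecutive I ->
  [seq runlen I (val i) | i <- enum 'I_m & run_start I i] = nseq #|I| 1.
Proof.
move=> nI.
have Hf : [seq i <- enum 'I_m | run_start I i] = [seq i <- enum 'I_m | i \in I].
  apply: eq_filter => i; rewrite /run_start.
  case iI: (i \in I) => //=.
  case E: (val i) => [|k] //=. apply/negP => /existsP [j /andP [jI /eqP hj]].
  by move: (ncE nI iI jI); rewrite E hj eqxx.
rewrite Hf.
have -> : [seq runlen I (val i) | i <- [seq i <- enum 'I_m | i \in I]] =
          [seq 1 | i <- [seq i <- enum 'I_m | i \in I]].
  apply/eq_in_map => i; rewrite mem_filter => /andP [iI _].
  rewrite /runlen /=.
  have -> : memn I (val i) by apply/existsP; exists i; rewrite iI eqxx.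
  rewrite runlen_aux0 //.
  apply/negP => /existsP [j /andP [jI /eqP hj]].
  by move: (ncE nI jI iI); rewrite hj eqxx.
rewrite map_const' size_filter.
congr nseq.
rewrite cardE /enum_mem -enumT size_filter.
by rewrite count_filter; apply: eq_count => i; rewrite /= !inE andbT.
Qed.

Definition Sx (U : finType) m (A : 'I_m -> {set U}) (x : U) : {set 'I_m} := [set i | x \in A i].

Lemma inH (U : finType) m (A : 'I_m -> {set U}) x I J :
  (x \in Hsys A I J) = (I \subset Sx A x) && (J \subset ~: Sx A x).
Proof.
rewrite inE; congr (_ && _).
  by apply/forall_inP/subsetP => H i /H; rewrite !inE.
by apply/forall_inP/subsetP => H i /H; rewrite !inE.
Qed.

Lemma rd_eq m (I J : {set 'I_m}) : nonconsecutive I -> nonconsecutive J -> #|I| = #|J| ->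
  run_decomp I = run_decomp J.
Proof. by move=> nI nJ c; rewrite /run_decomp !rd_map // c. Qed.

Lemma Hsys_split (U : finType) m (A : 'I_m -> {set U}) (I J : {set 'I_m}) j : j \in J ->
  #|Hsys A I J| = #|Hsys A I (J :\ j)| - #|Hsys A (j |: I) (J :\ j)|.
Proof.
move=> jJ.
have -> : Hsys A I J = Hsys A I (J :\ j) :\: Hsys A (j |: I) (J :\ j).
  apply/setP => x; rewrite [in RHS]inE !inH -{1}(setD1K jJ) !subUset !sub1set !inE.
  by case: (x \in A j); case: (I \subset Sx A x); case: (J :\ j \subset ~: Sx A x).
rewrite cardsD (setIidPr _) //; apply/subsetP => x.
by rewrite !inH subUset => /andP [/andP [_ ->] ->].
Qed.

Lemma disjointP (T : finType) (B C : {set T}) :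
  reflect (forall x, x \in B -> x \in C -> False) [disjoint B & C].
Proof.
rewrite -setI_eq0; apply: (iffP eqP) => H.
  move=> x xB xC; have : x \in B :&: C by rewrite inE xB xC.
  by rewrite H inE.
by apply/setP => x; rewrite !inE; apply/negP => /andP [] /H H1 /H1.
Qed.

Lemma transfer (U : finType) m (A : 'I_m -> {set U}) (hA : harmonic A) k :
  forall (I J I2 J2 : {set 'I_m}),
  #|J| = k -> #|J2| = k -> #|I| = #|I2| ->
  nonconsecutive (I :|: J) -> nonconsecutive (I2 :|: J2) ->
  [disjoint I & J] -> [disjoint I2 & J2] ->
  #|Hsys A I J| = #|Hsys A I2 J2|.
Proof.
elim: k => [|k IH] I J I2 J2 cJ cJ2 cI nIJ nIJ2 dIJ dIJ2.
  move/eqP: cJ; rewrite cards_eq0 => /eqP ->.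
  move/eqP: cJ2; rewrite cards_eq0 => /eqP ->.
  apply: hA; apply: rd_eq => //.
    by apply: nc_sub nIJ; rewrite subsetUl.
  by apply: nc_sub nIJ2; rewrite subsetUl.
have [j jJ] : exists j, j \in J by apply/set0Pn; rewrite -card_gt0 cJ.
have [j2 jJ2] : exists j, j \in J2 by apply/set0Pn; rewrite -card_gt0 cJ2.
rewrite (Hsys_split _ _ jJ) (Hsys_split _ _ jJ2).
have cD : #|J :\ j| = k by move: cJ; rewrite (cardsD1 j J) jJ => [[]].
have cD2 : #|J2 :\ j2| = k by move: cJ2; rewrite (cardsD1 j2 J2) jJ2 => [[]].
have jI : j \notin I by apply/negP => jI0; move/disjointP: dIJ => /(_ j jI0); apply.
have jI2 : j2 \notin I2 by apply/negP => jI0; move/disjointP: dIJ2 => /(_ j2 jI0); apply.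
congr (_ - _); apply: IH => //.
- apply: nc_sub nIJ; apply: setUS; exact: subD1set.
- apply: nc_sub nIJ2; apply: setUS; exact: subD1set.
- apply: disjointWr dIJ; exact: subD1set.
- apply: disjointWr dIJ2; exact: subD1set.
- by rewrite !cardsU1 jI jI2 cI.
- apply: nc_sub nIJ; apply/subsetP => x; rewrite !inE.
  by case/orP => [/orP [/eqP -> | ->] | /andP [_ ->]]; rewrite ?jJ ?orbT.
- apply: nc_sub nIJ2; apply/subsetP => x; rewrite !inE.
  by case/orP => [/orP [/eqP -> | ->] | /andP [_ ->]]; rewrite ?jJ2 ?orbT.
- apply/disjointP => x; rewrite !inE => /orP [/eqP -> | xI]; first by rewrite eqxx.
  by move=> /andP [_ xJ]; move/disjointP: dIJ => /(_ x xI); apply.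
- apply/disjointP => x; rewrite !inE => /orP [/eqP -> | xI]; first by rewrite eqxx.
  by move=> /andP [_ xJ]; move/disjointP: dIJ2 => /(_ x xI); apply.
Qed.

Lemma bin_mono n a b : a <= b -> b.*2 <= n -> 'C(n, a) <= 'C(n, b).
Proof.
elim: b => [|b IH] hab hb.
  by move: hab; rewrite leqn0 => /eqP ->.
case: (ltngtP a b.+1) => [lt| gt | ->] //; last by lia.
apply: (leq_trans (IH lt _)); first by lia.
have h := mul_bin_left n b.
have : b.+1 * 'C(n, b) <= b.+1 * 'C(n, b.+1).
  rewrite h; apply: leq_mul => //; lia.
by rewrite leq_pmul2l.
Qed.

Lemma bin_ge3 n k : 3 <= k -> k + 3 <= n -> 'C(n, 3) <= 'C(n, k).
Proof.
move=> h1 h2.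
case: (leqP k.*2 n) => h3; first exact: bin_mono.
rewrite -[X in _ <= X]bin_sub; last by lia.
apply: bin_mono; move: h3; rewrite -!muln2; lia.
Qed.

Lemma bin3 N : 'C(N, 3) * 6 = N * (N.-1 * N.-2).
Proof. by rewrite (bin_ffact N 3) !ffactnS ffactn0 muln1. Qed.

Lemma final_arith N M c : 26 <= N -> M <= N.*2 -> c * 6 = N * (N.-1 * N.-2) ->
  M * (M - 2) <= c.
Proof.
move=> h1 h2 h3.
have a1 : M * (M - 2) <= N.*2 * (N.*2 - 2) by apply: leq_mul => //; lia.
have a2 : N.*2 * (N.*2 - 2) = 4 * (N * N.-1) by lia.
have a3 : 24 * (N * N.-1) <= (N * N.-1) * N.-2 by rewrite mulnC leq_mul2l; apply/orP; right; lia.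
lia.
Qed.

Lemma exsub (T : finType) (X : {set T}) k : k <= #|X| -> exists Y : {set T}, Y \subset X /\ #|Y| = k.
Proof.
elim: k => [|k IH] h.
  by exists set0; rewrite sub0set cards0.
have [Y [sY cY]] := IH (ltnW h).
have : Y \proper X by rewrite properEcard sY cY h.
case/properP => _ [x xX xY].
exists (x |: Y); split; first by rewrite subUset sub1set xX sY.
by rewrite cardsU1 xY cY.
Qed.

Lemma nc_union m (X Y : {set 'I_m}) : nonconsecutive X -> nonconsecutive Y ->
  (forall x y, x \in X -> y \in Y -> (val x != (val y).+1) && (val y != (val x).+1)) ->
  nonconsecutive (X :|: Y).
Proof.
move=> nX nY H; apply: ncP => i j; rewrite !inE => /orP [iX|iY] /orP [jX|jY].
- exact: ncE nX iX jX.
- by case/andP: (H _ _ iX jY).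
- by case/andP: (H _ _ jX iY).
- exact: ncE nY iY jY.
Qed.

Lemma disj_of_H (U : finType) m (A : 'I_m -> {set U}) x I J :
  x \in Hsys A I J -> [disjoint I & J].
Proof.
rewrite inH => /andP [sI sJ]; apply/disjointP => i iI iJ.
by have := subsetP sJ _ iJ; rewrite inE (subsetP sI _ iI).
Qed.

Lemma cardD_sub (T : finType) (X Y : {set T}) : Y \subset X -> #|X :\: Y| = #|X| - #|Y|.
Proof. by move=> sYX; rewrite cardsD (setIidPr sYX). Qed.

Lemma arith2 a b c : 3 <= c -> c <= b - a -> a + 3 <= b.
Proof. lia. Qed.

Lemma split3 a x r : a + x = r -> 7 < r -> a < 3 -> 2 < x.
Proof. lia. Qed.

Theorem proposition4p24 (U : finType) (m : nat) (A : 'I_m -> {set U}) :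
  harmonic A -> #|U| < m * (m - 2) -> 51 <= m ->
  forall I J : {set 'I_m}, #|I| = 3 -> #|J| = 3 ->
    nonconsecutive I -> nonconsecutive J ->
    Hsys A I J = set0.
Proof.
case: m A => [|m] A hA hU hm; first by [].
move=> I J cI cJ nI nJ.
case: (set_0Vmem (Hsys A I J)) => [//|[x0 hx0]]; exfalso.
move: hx0; rewrite inH => /andP [IS JS].
set S0 := Sx A x0 in IS JS.
pose E := [set i : 'I_m.+1 | ~~ odd (val i)].
have hE : m.+1 <= #|E|.*2.
  by rewrite /E (card_ordP _ (fun k => ~~ odd k)) count_even.
have nE : nonconsecutive E.
  apply: ncP => i j; rewrite !inE => ei ej; apply/eqP => h.
  by move: ei; rewrite h /= negbK (negbTE ej).
have E26 : 26 <= #|E| by move: hE; rewrite -muln2; lia.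
pose K := I :|: J.
have cK : #|K| <= 6 by rewrite /K cardsU; lia.
pose B := K :|: [set inord (val k).-1 | k in K] :|: [set inord (val k).+1 | k in K].
have cB : #|B| <= 18.
  apply: (leq_trans (leq_card_setU _ _)).
  rewrite (_ : 18 = (6 + 6) + 6) //; apply: leq_add; last exact: leq_trans (leq_imset_card _ _) cK.
  apply: (leq_trans (leq_card_setU _ _)).
  apply: leq_add => //; exact: leq_trans (leq_imset_card _ _) cK.
pose R := E :\: B.
have cR : 8 <= #|R|.
  rewrite /R cardsD.
  have : #|E :&: B| <= #|B| by apply: subset_leq_card; exact: subsetIr.
  lia.
have farR : forall r k, r \in R -> k \in K -> (val r != (val k).+1) && (val k != (val r).+1).
  move=> r k; rewrite inE => /andP [rB _] kK.
  apply/andP; split; apply/eqP => h; move: rB; rewrite !inE.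
  - have h' : nat_of_ord r = (nat_of_ord k).+1 := h.
    have -> : r = inord (val k).+1 by apply: val_inj; rewrite /= inordK -h' ?ltn_ord.
    by rewrite (imset_f (fun k : 'I_m.+1 => inord (val k).+1 : 'I_m.+1) kK) !orbT.
  - have h' : nat_of_ord k = (nat_of_ord r).+1 := h.
    have -> : r = inord (val k).-1.
      by apply: val_inj; rewrite /= h' /= inordK ?ltn_ord.
    by rewrite (imset_f (fun k : 'I_m.+1 => inord (val k).-1 : 'I_m.+1) kK) !orbT.
have RE : R \subset E by exact: subsetDl.
have ncR : forall Y : {set 'I_m.+1}, Y \subset R -> nonconsecutive Y.
  move=> Y sY; apply: nc_sub nE; exact: subset_trans sY RE.
have [I' [J' [cI' [cJ' [nIJ' hx0]]]]] : exists I' J' : {set 'I_m.+1}, #|I'| = 3 /\ #|J'| = 3 /\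
    nonconsecutive (I' :|: J') /\ x0 \in Hsys A I' J'.
  have := cardsID S0 R.
  case: (leqP 3 #|R :&: S0|) => h1 h2.
    have [Y [sY cY]] := exsub h1.
    exists Y, J; do 3!split => //.
      apply: nc_union => //; first by apply: ncR; apply: subset_trans sY (subsetIl _ _).
      move=> x y xY yJ; apply: farR; first exact: (subsetP (subsetIl _ _) _ (subsetP sY _ xY)).
      by rewrite inE yJ orbT.
    by rewrite inH JS andbT; apply: subset_trans sY (subsetIr _ _).
  have h3 : 3 <= #|R :\: S0| by exact: split3 h2 cR h1.
  have [Y [sY cY]] := exsub h3.
  exists I, Y; do 3!split => //.
    apply: nc_union => //; first by apply: ncR; apply: subset_trans sY (subsetDl _ _).
    move=> x y xI yY; rewrite andbC; apply: farR; first exact: (subsetP (subsetDl _ _) _ (subsetP sY _ yY)).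
    by rewrite inE xI.
  rewrite inH IS /=; apply/subsetP => y /(subsetP sY); rewrite !inE => /andP [].
  by rewrite /S0 => ->.
have dIJ' := disj_of_H hx0.
have [D [sD cD]] := exsub (leq_trans (isT : 6 <= 26) E26).
have h3D : 3 <= #|D| by rewrite cD.
have [I2 [sI2 cI2]] := exsub h3D.
pose J2 := D :\: I2.
have cJ2 : #|J2| = 3 by rewrite /J2 cardD_sub // cD cI2.
have DE : I2 :|: J2 \subset E.
  apply: subset_trans sD; rewrite subUset sI2; exact: subsetDl.
have nIJ2 : nonconsecutive (I2 :|: J2) by apply: nc_sub nE.
have dIJ2 : [disjoint I2 & J2].
  by apply/disjointP => i iI; rewrite inE iI.
have ht := transfer hA cJ' cJ2 (etrans cI' (esym cI2)) nIJ' nIJ2 dIJ' dIJ2.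
have [x hx] : exists x, x \in Hsys A I2 J2.
  apply/set0Pn; rewrite -card_gt0 -ht card_gt0; apply/set0Pn; by exists x0.
move: hx; rewrite inH => /andP [I2S J2S].
pose T := Sx A x :&: E.
have TE : T \subset E by exact: subsetIr.
have kT : 3 <= #|T|.
  rewrite -cI2; apply: subset_leq_card; rewrite subsetI I2S.
  apply: subset_trans DE; exact: subsetUl.
have kT2 : #|T| + 3 <= #|E|.
  apply: (arith2 (c := #|J2|)); first by rewrite cJ2.
  rewrite -cardD_sub //; apply: subset_leq_card; apply/subsetP => i iJ.
  have iE : i \in E by apply: (subsetP DE); rewrite inE iJ orbT.
  by move: (subsetP J2S _ iJ) iE; rewrite !inE => /negbTE -> ->.
have main : [set T' : {set 'I_m.+1} | T' \subset E & #|T'| == #|T|] \subset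
            (fun y => Sx A y :&: E) @: [set: U].
  apply/subsetP => T'; rewrite inE => /andP [T'E /eqP cT'].
  have nT : nonconsecutive (T :|: (E :\: T)) by apply: nc_sub nE; rewrite subUset TE subsetDl.
  have nT' : nonconsecutive (T' :|: (E :\: T')) by apply: nc_sub nE; rewrite subUset T'E subsetDl.
  have dT : [disjoint T & E :\: T] by apply/disjointP => i iT; rewrite inE iT.
  have dT' : [disjoint T' & E :\: T'] by apply/disjointP => i iT; rewrite inE iT.
  have c2 : #|E :\: T'| = #|E :\: T| by rewrite !cardD_sub // cT'.
  have ht2 := transfer hA c2 (erefl _) cT' nT' nT dT' dT.
  have [y hy] : exists y, y \in Hsys A T' (E :\: T').
    apply/set0Pn; rewrite -card_gt0 ht2 card_gt0; apply/set0Pn; exists x.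
    rewrite inH subsetIl /=; apply/subsetP => i; rewrite !inE => /andP [].
    by case: (x \in A i); case: (odd (val i)).
  move: hy; rewrite inH => /andP [T'S T'D].
  apply/imsetP; exists y; first by rewrite inE.
  apply/setP => i; rewrite inE.
  case iE: (i \in E); last first.
    by rewrite andbF; apply/negP => /(subsetP T'E); rewrite iE.
  rewrite andbT; apply/idP/idP => [iT|iS]; first exact: (subsetP T'S).
  apply/negPn/negP => iT.
  have : i \in E :\: T' by rewrite in_setD iT iE.
  by move/(subsetP T'D); rewrite in_setC iS.
have := subset_leq_card main.
rewrite cards_draws => h.
have h2 := leq_trans h (leq_imset_card _ _).
rewrite cardsT in h2.
have h3 := leq_trans (bin_ge3 kT kT2) h2.
have h4 := final_arith E26 hE (bin3 #|E|).
move: (leq_trans h4 h3) hU; rewrite leqNgt => /negP; apply.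
Qed.
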